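(* Let $\nu\ge1$, $d:\mathbb{Z}^\nu\to\mathbb{C}$ bounded, $J=J_0+D$ on $\ell^2(\mathbb{Z}^\nu)$, and $b\in\mathbb{R}$. Suppose that for some $j\in\{1,\dots,\nu\}$ one of the following holds: (i) $\sup\{k_j: k\in\mathbb{Z}^\nu,\ \Im(d(k))=b\}<\infty$; (ii) $\inf\{k_j: k\in\mathbb{Z}^\nu,\ \Im(d(k))=b\}>-\infty$. (Here $\sup\emptyset=-\infty$ and $\inf\emptyset=+\infty$.) Then $J$ has no boundary eigenvalue with imaginary part $b$.
   Context: $k_j$ denotes the $j$-th component of $k\in\mathbb{Z}^\nu$. $J_0$ is the discrete Laplacian on $\ell^2(\mathbb{Z}^\nu)$: $(J_0u)(k)=\sum_{l\in\mathbb{Z}^\nu:\|l\|_1=1}u(k+l)$, $\|l\|_1=\sum_j|l_j|$. $D$ is multiplication by $d$. The numerical range is $\operatorname{Num}(J)=\{\langle Ju,u\rangle:\|u\|=1\}$, and a boundary eigenvalue of $J$ is an eigenvalue of $J$ lying in the topological boundary of $\operatorname{Num}(J)$. *)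

(* Defs.v *)
From Stdlib Require Import Reals Lra Lia ZArith Arith List.
Open Scope R_scope.

Definition Cplx : Type := (R * R)%type.
Definition Re (z : Cplx) : R := fst z.
Definition Im (z : Cplx) : R := snd z.
Definition C0 : Cplx := (0, 0).
Definition Cadd (z w : Cplx) : Cplx := (Re z + Re w, Im z + Im w).
Definition Csub (z w : Cplx) : Cplx := (Re z - Re w, Im z - Im w).
Definition Cmul (z w : Cplx) : Cplx :=
  (Re z * Re w - Im z * Im w, Re z * Im w + Im z * Re w).
Definition Cconj (z : Cplx) : Cplx := (Re z, - Im z).
Definition Cnorm2 (z : Cplx) : R := Re z * Re z + Im z * Im z.
Definition Cmod (z : Cplx) : R := sqrt (Cnorm2 z).

(* A point of Z^nu is a function k : nat -> Z with k i = 0 for i >= nu;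
   its j-th component (1-based j) is k (j-1). *)
Definition Pt : Type := nat -> Z.
Definition lattice (nu : nat) (k : Pt) : Prop := forall i, (nu <= i)%nat -> k i = 0%Z.

Definition upd (k : Pt) (n : nat) (z : Z) : Pt :=
  fun i => if Nat.eqb i n then z else k i.

Definition shiftp (k : Pt) (i : nat) : Pt := upd k i (k i + 1)%Z.
Definition shiftm (k : Pt) (i : nat) : Pt := upd k i (k i - 1)%Z.

Definition zrange (N : nat) : list Z :=
  map (fun i => (Z.of_nat i - Z.of_nat N)%Z) (seq 0 (2 * N + 1)).

Fixpoint box (nu N : nat) : list Pt :=
  match nu with
  | O => (fun _ => 0%Z) :: nil
  | S n => flat_map (fun k => map (fun z => upd k n z) (zrange N)) (box n N)
  end.

Definition Csum (l : list Pt) (f : Pt -> Cplx) : Cplx :=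
  fold_right Cadd C0 (map f l).

Definition boxnorm2 (nu : nat) (u : Pt -> Cplx) (N : nat) : R :=
  Re (Csum (box nu N) (fun k => (Cnorm2 (u k), 0))).

(* u is in l^2(Z^nu): the (nonnegative) series sum |u(k)|^2 converges,
   i.e. its exhausting box partial sums are bounded *)
Definition l2 (nu : nat) (u : Pt -> Cplx) : Prop :=
  exists M : R, forall N, boxnorm2 nu u N <= M.

Definition norm2_is (nu : nat) (u : Pt -> Cplx) (r : R) : Prop :=
  Un_cv (boxnorm2 nu u) r.

(* <u, v> = z, the inner product sum_k u(k) conj(v(k)) (absolutely convergent
   for u, v in l^2), computed as the limit over exhausting boxes *)
Definition inner_is (nu : nat) (u v : Pt -> Cplx) (z : Cplx) : Prop :=
  Un_cv (fun N => Re (Csum (box nu N) (fun k => Cmul (u k) (Cconj (v k))))) (Re z) /\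
  Un_cv (fun N => Im (Csum (box nu N) (fun k => Cmul (u k) (Cconj (v k))))) (Im z).

Definition J0 (nu : nat) (u : Pt -> Cplx) (k : Pt) : Cplx :=
  fold_right Cadd C0
    (map (fun i => Cadd (u (shiftp k i)) (u (shiftm k i))) (seq 0 nu)).

Definition Japp (nu : nat) (d : Pt -> Cplx) (u : Pt -> Cplx) (k : Pt) : Cplx :=
  Cadd (J0 nu u k) (Cmul (d k) (u k)).

Definition NumRange (nu : nat) (d : Pt -> Cplx) (z : Cplx) : Prop :=
  exists u : Pt -> Cplx, l2 nu u /\ norm2_is nu u 1 /\ inner_is nu (Japp nu d u) u z.

Definition eigenvalue (nu : nat) (d : Pt -> Cplx) (lam : Cplx) : Prop :=
  exists u : Pt -> Cplx, l2 nu u /\ (exists k, lattice nu k /\ u k <> C0) /\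
    forall k, lattice nu k -> Japp nu d u k = Cmul lam (u k).

Definition boundary (S : Cplx -> Prop) (z : Cplx) : Prop :=
  forall eps, eps > 0 ->
    (exists w, S w /\ Cmod (Csub w z) < eps) /\
    (exists w, ~ S w /\ Cmod (Csub w z) < eps).

Definition boundary_eigenvalue (nu : nat) (d : Pt -> Cplx) (lam : Cplx) : Prop :=
  eigenvalue nu d lam /\ boundary (NumRange nu d) lam.

(* Main.v *)
Require Import Defs.
From Stdlib Require Import Reals ZArith Lra Lia Psatz List Arith Classical FunctionalExtensionality.
Open Scope R_scope.

Ltac ceq := unfold Cadd, Csub, Cmul, Cconj, Cnorm2, C0, Re, Im in *;
  apply injective_projections; simpl; ring.

Definition gsum {A} (l : list A) (f : A -> Cplx) : Cplx := fold_right Cadd C0 (map f l).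
Definition rsum {A} (l : list A) (f : A -> R) : R := fold_right Rplus 0 (map f l).

Lemma gsum_nil {A} (f : A -> Cplx) : gsum nil f = C0. Proof. reflexivity. Qed.
Lemma gsum_cons {A} x l (f : A -> Cplx) : gsum (x :: l) f = Cadd (f x) (gsum l f).
Proof. reflexivity. Qed.

Lemma gsum_app {A} l1 l2 (f : A -> Cplx) : gsum (l1 ++ l2) f = Cadd (gsum l1 f) (gsum l2 f).
Proof. induction l1; simpl. ceq. rewrite !gsum_cons, IHl1. ceq. Qed.

Lemma gsum_map {A B} (g : A -> B) l f : gsum (map g l) f = gsum l (fun x => f (g x)).
Proof. unfold gsum. now rewrite map_map. Qed.

Lemma gsum_flat_map {A B} (F : A -> list B) l f :
  gsum (flat_map F l) f = gsum l (fun x => gsum (F x) f).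
Proof. induction l; simpl. reflexivity. rewrite gsum_app, gsum_cons, IHl. reflexivity. Qed.

Lemma gsum_ext_in {A} l (f g : A -> Cplx) : (forall x, In x l -> f x = g x) -> gsum l f = gsum l g.
Proof. intro H. unfold gsum. f_equal. now apply map_ext_in. Qed.

Lemma gsum_add {A} l (f g : A -> Cplx) :
  gsum l (fun x => Cadd (f x) (g x)) = Cadd (gsum l f) (gsum l g).
Proof. induction l. simpl. ceq. rewrite !gsum_cons, IHl. ceq. Qed.

Lemma gsum_scal {A} l c (f : A -> Cplx) : gsum l (fun x => Cmul c (f x)) = Cmul c (gsum l f).
Proof. induction l. simpl. ceq. rewrite !gsum_cons, IHl. ceq. Qed.

Lemma gsum_mulr {A} l c (f : A -> Cplx) : gsum l (fun x => Cmul (f x) c) = Cmul (gsum l f) c.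
Proof. induction l. simpl. ceq. rewrite !gsum_cons, IHl. ceq. Qed.

Lemma gsum_conj {A} l (f : A -> Cplx) : gsum l (fun x => Cconj (f x)) = Cconj (gsum l f).
Proof. induction l. simpl. ceq. rewrite !gsum_cons, IHl. ceq. Qed.

Lemma gsum_C0 {A} (l : list A) : gsum l (fun _ => C0) = C0.
Proof. induction l. reflexivity. rewrite gsum_cons, IHl. ceq. Qed.

Lemma gsum_swap {A B} (l : list A) (L : list B) g :
  gsum l (fun x => gsum L (fun i => g x i)) = gsum L (fun i => gsum l (fun x => g x i)).
Proof.
  induction l; simpl.
  - now rewrite gsum_C0.
  - rewrite gsum_cons, IHl. rewrite <- gsum_add. reflexivity.
Qed.

Lemma Re_gsum {A} l (f : A -> Cplx) : Re (gsum l f) = rsum l (fun x => Re (f x)).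
Proof. induction l; simpl. reflexivity. unfold rsum in *. simpl. rewrite <- IHl. reflexivity. Qed.
Lemma Im_gsum {A} l (f : A -> Cplx) : Im (gsum l f) = rsum l (fun x => Im (f x)).
Proof. induction l; simpl. reflexivity. unfold rsum in *. simpl. rewrite <- IHl. reflexivity. Qed.

Lemma rsum_app {A} l1 l2 (f : A -> R) : rsum (l1 ++ l2) f = rsum l1 f + rsum l2 f.
Proof. induction l1; unfold rsum in *; simpl. ring. rewrite IHl1. ring. Qed.
Lemma rsum_map {A B} (g : A -> B) l f : rsum (map g l) f = rsum l (fun x => f (g x)).
Proof. unfold rsum. now rewrite map_map. Qed.
Lemma rsum_flat_map {A B} (F : A -> list B) l f :
  rsum (flat_map F l) f = rsum l (fun x => rsum (F x) f).
Proof. induction l; simpl. reflexivity. rewrite rsum_app, IHl. reflexivity. Qed.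
Lemma rsum_le {A} l (f g : A -> R) : (forall x, f x <= g x) -> rsum l f <= rsum l g.
Proof. intro H. induction l; unfold rsum in *; simpl. lra. specialize (H a). lra. Qed.
Lemma rsum_nonneg {A} l (f : A -> R) : (forall x, 0 <= f x) -> 0 <= rsum l f.
Proof. intro H. induction l; unfold rsum in *; simpl. lra. specialize (H a). lra. Qed.

Lemma gsum_seq_delta (g : nat -> Cplx) m : forall len s, (s <= m < s + len)%nat ->
  gsum (seq s len) (fun i => if Nat.eqb i m then g i else C0) = g m.
Proof.
  induction len; intros s Hs. lia.
  simpl. rewrite gsum_cons. destruct (Nat.eqb_spec s m).
  - subst. replace (gsum (seq (S m) len) (fun i => if Nat.eqb i m then g i else C0)) with C0. ceq.
    transitivity (gsum (seq (S m) len) (fun _ => C0)). symmetry; apply gsum_C0.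
    apply gsum_ext_in. intros x Hx.
    apply in_seq in Hx. destruct (Nat.eqb_spec x m). lia. reflexivity.
  - rewrite IHlen by lia. ceq.
Qed.

Fixpoint eqpt (n : nat) (k p : Pt) : bool :=
  match n with O => true | S n' => eqpt n' k p && Z.eqb (k n') (p n') end.

Lemma eqpt_spec n k p : eqpt n k p = true <-> forall i, (i < n)%nat -> k i = p i.
Proof.
  induction n; simpl. split; intros; [lia|auto].
  rewrite Bool.andb_true_iff, IHn, Z.eqb_eq. split.
  - intros [H1 H2] i Hi. destruct (Nat.eq_dec i n). now subst. apply H1. lia.
  - intros H. split. intros; apply H; lia. apply H; lia.
Qed.

Lemma eqpt_agree n k p q : (forall i, (i < n)%nat -> p i = q i) -> eqpt n k p = eqpt n k q.
Proof.
  intro H. destruct (eqpt n k p) eqn:E1; destruct (eqpt n k q) eqn:E2; auto.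
  - rewrite eqpt_spec in E1. assert (eqpt n k q = true). apply eqpt_spec. intros i Hi.
    rewrite E1, H; auto. congruence.
  - rewrite eqpt_spec in E2. assert (eqpt n k p = true). apply eqpt_spec. intros i Hi.
    rewrite E2, H; auto. congruence.
Qed.

Lemma eqpt_agree_l n k k' p : (forall i, (i < n)%nat -> k i = k' i) -> eqpt n k p = eqpt n k' p.
Proof.
  intro H. destruct (eqpt n k p) eqn:E1; destruct (eqpt n k' p) eqn:E2; auto.
  - rewrite eqpt_spec in E1. assert (eqpt n k' p = true). apply eqpt_spec. intros i Hi.
    rewrite <- H; auto. congruence.
  - rewrite eqpt_spec in E2. assert (eqpt n k p = true). apply eqpt_spec. intros i Hi.
    rewrite H; auto. congruence.
Qed.

Lemma lattice_eq n k p : lattice n k -> lattice n p -> eqpt n k p = true -> k = p.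
Proof.
  intros Hk Hp He. rewrite eqpt_spec in He. extensionality i.
  destruct (lt_dec i n). auto. rewrite Hk, Hp; auto; lia.
Qed.

Lemma upd_same k n z : upd k n z n = z.
Proof. unfold upd. now rewrite Nat.eqb_refl. Qed.
Lemma upd_other k n z i : i <> n -> upd k n z i = k i.
Proof. intro H. unfold upd. apply Nat.eqb_neq in H. now rewrite H. Qed.

Lemma box_lattice nu N k : In k (box nu N) -> lattice nu k.
Proof.
  revert k. induction nu; simpl; intros k Hk.
  - destruct Hk as [<-|[]]. intros i _. reflexivity.
  - apply in_flat_map in Hk. destruct Hk as [k' [Hk' Hin]].
    apply in_map_iff in Hin. destruct Hin as [z [<- _]].
    intros i Hi. rewrite upd_other by lia. apply (IHnu k'); auto; lia.
Qed.

Lemma zrange_delta N (g : Z -> Cplx) c : (- Z.of_nat N <= c <= Z.of_nat N)%Z ->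
  gsum (zrange N) (fun z => if Z.eqb z c then g z else C0) = g c.
Proof.
  intro Hc. unfold zrange. rewrite gsum_map.
  set (m := Z.to_nat (c + Z.of_nat N)).
  transitivity (gsum (seq 0 (2 * N + 1)) (fun i => if Nat.eqb i m then g (Z.of_nat i - Z.of_nat N)%Z else C0)).
  - apply gsum_ext_in. intros i Hi.
    destruct (Z.eqb_spec (Z.of_nat i - Z.of_nat N) c); destruct (Nat.eqb_spec i m); auto; subst m; lia.
  - rewrite (gsum_seq_delta (fun i => g (Z.of_nat i - Z.of_nat N)%Z)) by lia. f_equal. subst m. lia.
Qed.

Lemma eqpt_upd n k z p : eqpt (S n) (upd k n z) p = andb (eqpt n k p) (Z.eqb z (p n)).
Proof.
  simpl. rewrite upd_same. f_equal. apply eqpt_agree_l. intros i Hi. apply upd_other. lia.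
Qed.

Lemma box_delta nu : forall N p f, lattice nu p ->
  (forall i, (i < nu)%nat -> - Z.of_nat N <= p i <= Z.of_nat N)%Z ->
  gsum (box nu N) (fun k => if eqpt nu k p then f k else C0) = f p.
Proof.
  induction nu; intros N p f Hp Hb.
  - simpl. rewrite gsum_cons, gsum_nil.
    replace p with (fun _ : nat => 0%Z). ceq. extensionality i. symmetry. apply Hp. lia.
  - simpl box. rewrite gsum_flat_map.
    set (p' := upd p nu 0%Z).
    transitivity (gsum (box nu N) (fun k => if eqpt nu k p' then f (upd k nu (p nu)) else C0)).
    + apply gsum_ext_in. intros k _. rewrite gsum_map.
      transitivity (gsum (zrange N) (fun z => if Z.eqb z (p nu) then
         (if eqpt nu k p' then f (upd k nu z) else C0) else C0)).
      * apply gsum_ext_in. intros z _. rewrite eqpt_upd.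
        rewrite (eqpt_agree nu k p p'). destruct (eqpt nu k p'); destruct (Z.eqb z (p nu)); reflexivity.
        intros i Hi. subst p'. rewrite upd_other; auto. lia.
      * rewrite zrange_delta. reflexivity. apply Hb. lia.
    + rewrite (IHnu N p' (fun k => f (upd k nu (p nu)))).
      * f_equal. extensionality i. unfold p', upd. destruct (Nat.eqb_spec i nu); subst; reflexivity.
      * intros i Hi. subst p'. unfold upd. destruct (Nat.eqb_spec i nu). reflexivity. apply Hp. lia.
      * intros i Hi. subst p'. rewrite upd_other by lia. apply Hb. lia.
Qed.

Lemma rsum_cons {A} x l (f : A -> R) : rsum (x :: l) f = f x + rsum l f.
Proof. reflexivity. Qed.
Lemma seq0S m : seq 0 (S m) = 0%nat :: map S (seq 0 m).
Proof. simpl. now rewrite seq_shift. Qed.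

Lemma zrange_mono N (h : Z -> R) : (forall z, 0 <= h z) -> rsum (zrange N) h <= rsum (zrange (S N)) h.
Proof.
  intro H. unfold zrange. rewrite !rsum_map.
  replace (2 * S N + 1)%nat with (S (S (2 * N + 1))) by lia.
  rewrite seq_S. rewrite seq0S. rewrite rsum_app, rsum_cons, rsum_map.
  replace (rsum (seq 0 (2 * N + 1)) (fun x => h (Z.of_nat (S x) - Z.of_nat (S N))%Z))
    with (rsum (seq 0 (2 * N + 1)) (fun x => h (Z.of_nat x - Z.of_nat N)%Z)).
  - rewrite rsum_cons. unfold rsum at 3. simpl fold_right.
    pose proof (H (Z.of_nat (0 + S (2 * N + 1)) - Z.of_nat (S N))%Z).
    pose proof (H (Z.of_nat 0 - Z.of_nat (S N))%Z). lra.
  - unfold rsum. f_equal. apply map_ext. intro x. f_equal. lia.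
Qed.

Lemma box_mono nu : forall N (g : Pt -> R), (forall k, 0 <= g k) ->
  rsum (box nu N) g <= rsum (box nu (S N)) g.
Proof.
  induction nu; intros N g Hg.
  - simpl. lra.
  - simpl box. rewrite !rsum_flat_map.
    apply Rle_trans with (rsum (box nu N) (fun x => rsum (map (fun z => upd x nu z) (zrange (S N))) g)).
    + apply rsum_le. intro x. rewrite !rsum_map. apply zrange_mono. auto.
    + apply IHnu. intro k. apply rsum_nonneg. auto.
Qed.

Lemma J0_gsum nu u k : J0 nu u k = gsum (seq 0 nu) (fun i => Cadd (u (shiftp k i)) (u (shiftm k i))).
Proof. reflexivity. Qed.

Lemma J0_lin nu P Y f g k :
  J0 nu (fun k => Cadd (Cmul P (f k)) (Cmul Y (g k))) k = Cadd (Cmul P (J0 nu f k)) (Cmul Y (J0 nu g k)).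
Proof.
  rewrite !J0_gsum, <- !gsum_scal, <- gsum_add. apply gsum_ext_in. intros. ceq.
Qed.

Lemma Japp_lin nu d P Y f g k :
  Japp nu d (fun k => Cadd (Cmul P (f k)) (Cmul Y (g k))) k = Cadd (Cmul P (Japp nu d f k)) (Cmul Y (Japp nu d g k)).
Proof. unfold Japp. rewrite J0_lin. ceq. Qed.

Lemma shiftp_lattice nu k i : (i < nu)%nat -> lattice nu k -> lattice nu (shiftp k i).
Proof. intros Hi Hk j Hj. unfold shiftp. rewrite upd_other by lia. auto. Qed.
Lemma shiftm_lattice nu k i : (i < nu)%nat -> lattice nu k -> lattice nu (shiftm k i).
Proof. intros Hi Hk j Hj. unfold shiftm. rewrite upd_other by lia. auto. Qed.

Lemma bool_iff_eq (a b : bool) : (a = true <-> b = true) -> a = b.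
Proof. destruct a, b; intuition. Qed.

Lemma eqpt_shiftp nu k p i : eqpt nu (shiftp k i) p = eqpt nu k (shiftm p i).
Proof.
  apply bool_iff_eq. rewrite !eqpt_spec. unfold shiftp, shiftm, upd. split; intros H j Hj; specialize (H j Hj);
  destruct (Nat.eqb_spec j i); subst; lia.
Qed.
Lemma eqpt_shiftm nu k p i : eqpt nu (shiftm k i) p = eqpt nu k (shiftp p i).
Proof.
  apply bool_iff_eq. rewrite !eqpt_spec. unfold shiftp, shiftm, upd. split; intros H j Hj; specialize (H j Hj);
  destruct (Nat.eqb_spec j i); subst; lia.
Qed.
Lemma eqpt_shiftp_self nu p i : (i < nu)%nat -> eqpt nu (shiftp p i) p = false.
Proof.
  intro Hi. destruct (eqpt nu (shiftp p i) p) eqn:E; auto. rewrite eqpt_spec in E.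
  specialize (E i Hi). unfold shiftp in E. rewrite upd_same in E. lia.
Qed.
Lemma eqpt_shiftm_self nu p i : (i < nu)%nat -> eqpt nu (shiftm p i) p = false.
Proof.
  intro Hi. destruct (eqpt nu (shiftm p i) p) eqn:E; auto. rewrite eqpt_spec in E.
  specialize (E i Hi). unfold shiftm in E. rewrite upd_same in E. lia.
Qed.
Lemma eqpt_refl nu p : eqpt nu p p = true.
Proof. apply eqpt_spec. auto. Qed.

Definition dlt nu (p : Pt) : Pt -> Cplx := fun k => if eqpt nu k p then (1, 0) else C0.

Definition inbox nu (N : nat) (q : Pt) := forall i, (i < nu)%nat -> (- Z.of_nat N <= q i <= Z.of_nat N)%Z.

Lemma S_ud nu N p u : lattice nu p -> inbox nu N p ->
  gsum (box nu N) (fun k => Cmul (u k) (Cconj (dlt nu p k))) = u p.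
Proof.
  intros Hp Hb. rewrite <- (box_delta nu N p u) by auto. apply gsum_ext_in. intros k _.
  unfold dlt. destruct (eqpt nu k p); ceq.
Qed.
Lemma S_du nu N p u : lattice nu p -> inbox nu N p ->
  gsum (box nu N) (fun k => Cmul (dlt nu p k) (Cconj (u k))) = Cconj (u p).
Proof.
  intros Hp Hb. rewrite <- (box_delta nu N p (fun k => Cconj (u k))) by auto. apply gsum_ext_in. intros k _.
  unfold dlt. destruct (eqpt nu k p); ceq.
Qed.
Lemma S_dd nu N p : lattice nu p -> inbox nu N p ->
  gsum (box nu N) (fun k => Cmul (dlt nu p k) (Cconj (dlt nu p k))) = (1, 0).
Proof.
  intros Hp Hb. rewrite <- (box_delta nu N p (fun k => (1,0))) by auto. apply gsum_ext_in. intros k _.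
  unfold dlt. destruct (eqpt nu k p); ceq.
Qed.

Lemma Japp_dlt_p nu d p : Japp nu d (dlt nu p) p = d p.
Proof.
  unfold Japp. rewrite J0_gsum.
  rewrite (gsum_ext_in _ _ (fun _ => C0)). rewrite gsum_C0. unfold dlt. rewrite eqpt_refl. ceq.
  intros i Hi. apply in_seq in Hi. unfold dlt. rewrite eqpt_shiftp_self, eqpt_shiftm_self by lia. ceq.
Qed.

Lemma S_Jdd nu N d p : lattice nu p -> inbox nu N p ->
  gsum (box nu N) (fun k => Cmul (Japp nu d (dlt nu p) k) (Cconj (dlt nu p k))) = d p.
Proof.
  intros Hp Hb. rewrite <- (Japp_dlt_p nu d p).
  rewrite <- (box_delta nu N p (Japp nu d (dlt nu p))) by auto. apply gsum_ext_in. intros k _.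
  unfold dlt at 2. destruct (eqpt nu k p); ceq.
Qed.

Definition inbox1 nu N (p : Pt) := forall i, (i < nu)%nat -> (- Z.of_nat N + 1 <= p i <= Z.of_nat N - 1)%Z.

Lemma inbox1_shiftp nu N p i : (i < nu)%nat -> inbox1 nu N p -> inbox nu N (shiftp p i).
Proof. intros Hi H j Hj. specialize (H j Hj). unfold shiftp, upd. destruct (Nat.eqb_spec j i); subst; lia. Qed.
Lemma inbox1_shiftm nu N p i : (i < nu)%nat -> inbox1 nu N p -> inbox nu N (shiftm p i).
Proof. intros Hi H j Hj. specialize (H j Hj). unfold shiftm, upd. destruct (Nat.eqb_spec j i); subst; lia. Qed.
Lemma inbox1_inbox nu N p : inbox1 nu N p -> inbox nu N p.
Proof. intros H j Hj. specialize (H j Hj). lia. Qed.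

Lemma S_Jdu nu N d p u : lattice nu p -> inbox1 nu N p ->
  gsum (box nu N) (fun k => Cmul (Japp nu d (dlt nu p) k) (Cconj (u k))) =
  Cadd (Cconj (J0 nu u p)) (Cmul (d p) (Cconj (u p))).
Proof.
  intros Hp Hb.
  transitivity (gsum (box nu N) (fun k => Cadd
     (gsum (seq 0 nu) (fun i => Cadd (if eqpt nu k (shiftm p i) then Cconj (u k) else C0)
                                     (if eqpt nu k (shiftp p i) then Cconj (u k) else C0)))
     (if eqpt nu k p then Cmul (d k) (Cconj (u k)) else C0))).
  - apply gsum_ext_in. intros k _. unfold Japp. rewrite J0_gsum.
    transitivity (Cadd (Cmul (gsum (seq 0 nu) (fun i => Cadd (dlt nu p (shiftp k i)) (dlt nu p (shiftm k i)))) (Cconj (u k)))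
                       (Cmul (Cmul (d k) (dlt nu p k)) (Cconj (u k)))). ceq.
    f_equal.
    + rewrite <- gsum_mulr. apply gsum_ext_in. intros i _. unfold dlt.
      rewrite eqpt_shiftp, eqpt_shiftm. destruct (eqpt nu k (shiftm p i)), (eqpt nu k (shiftp p i)); ceq.
    + unfold dlt. destruct (eqpt nu k p); ceq.
  - rewrite gsum_add, gsum_swap. rewrite (box_delta nu N p (fun k => Cmul (d k) (Cconj (u k)))); [|auto|apply inbox1_inbox; auto].
    f_equal. rewrite J0_gsum, <- gsum_conj. apply gsum_ext_in. intros i Hi. apply in_seq in Hi.
    rewrite gsum_add.
    rewrite (box_delta nu N (shiftm p i) (fun k => Cconj (u k))) by (first [apply shiftm_lattice | apply inbox1_shiftm]; auto; lia).
    rewrite (box_delta nu N (shiftp p i) (fun k => Cconj (u k))) by (first [apply shiftp_lattice | apply inbox1_shiftp]; auto; lia).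
    ceq.
Qed.

Definition Bc nu u N := gsum (box nu N) (fun k => (Cnorm2 (u k), 0)).

Definition vec nu u p P Y : Pt -> Cplx := fun k => Cadd (Cmul P (u k)) (Cmul Y (dlt nu p k)).

Lemma inner_expand nu d u lam p P Y N :
  (forall k, lattice nu k -> Japp nu d u k = Cmul lam (u k)) ->
  lattice nu p -> inbox1 nu N p ->
  gsum (box nu N) (fun k => Cmul (Japp nu d (vec nu u p P Y) k) (Cconj (vec nu u p P Y k))) =
  Cadd (Cmul (Cmul (Cmul P (Cconj P)) lam) (Bc nu u N))
   (Cadd (Cmul (Cmul (Cmul P lam) (Cconj Y)) (u p))
   (Cadd (Cmul (Cmul Y (Cconj P)) (Cadd (Cconj (J0 nu u p)) (Cmul (d p) (Cconj (u p)))))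
         (Cmul (Cmul Y (Cconj Y)) (d p)))).
Proof.
  intros Heig Hp Hb.
  transitivity (gsum (box nu N) (fun k =>
     Cadd (Cmul (Cmul (Cmul P (Cconj P)) lam) (Cnorm2 (u k), 0))
    (Cadd (Cmul (Cmul (Cmul P lam) (Cconj Y)) (Cmul (u k) (Cconj (dlt nu p k))))
    (Cadd (Cmul (Cmul Y (Cconj P)) (Cmul (Japp nu d (dlt nu p) k) (Cconj (u k))))
          (Cmul (Cmul Y (Cconj Y)) (Cmul (Japp nu d (dlt nu p) k) (Cconj (dlt nu p k)))))))).
  - apply gsum_ext_in. intros k Hk. unfold vec. rewrite Japp_lin.
    rewrite Heig by (eapply box_lattice; eauto). ceq.
  - rewrite !gsum_add, !gsum_scal. unfold Bc.
    rewrite S_ud, S_Jdu, S_Jdd; auto using inbox1_inbox.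
Qed.

Lemma norm_expand nu u p P Y N :
  lattice nu p -> inbox1 nu N p ->
  gsum (box nu N) (fun k => (Cnorm2 (vec nu u p P Y k), 0)) =
  Cadd (Cmul (Cmul P (Cconj P)) (Bc nu u N))
   (Cadd (Cmul (Cmul P (Cconj Y)) (u p))
   (Cadd (Cmul (Cmul Y (Cconj P)) (Cconj (u p)))
         (Cmul Y (Cconj Y)))).
Proof.
  intros Hp Hb.
  transitivity (gsum (box nu N) (fun k =>
     Cadd (Cmul (Cmul P (Cconj P)) (Cnorm2 (u k), 0))
    (Cadd (Cmul (Cmul P (Cconj Y)) (Cmul (u k) (Cconj (dlt nu p k))))
    (Cadd (Cmul (Cmul Y (Cconj P)) (Cmul (dlt nu p k) (Cconj (u k))))
          (Cmul (Cmul Y (Cconj Y)) (Cmul (dlt nu p k) (Cconj (dlt nu p k)))))))).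
  - apply gsum_ext_in. intros k Hk. unfold vec. ceq.
  - rewrite !gsum_add, !gsum_scal. unfold Bc.
    rewrite S_ud, S_du, S_dd; auto using inbox1_inbox. ceq.
Qed.

Lemma Im_Bc nu u N : Im (Bc nu u N) = 0.
Proof. unfold Bc. rewrite Im_gsum. unfold rsum. simpl. induction (box nu N); simpl; auto. rewrite IHl. ring. Qed.

Lemma Bc_pair nu u N : Bc nu u N = (boxnorm2 nu u N, 0).
Proof. apply injective_projections. reflexivity. apply Im_Bc. Qed.

Lemma boxnorm2_rsum nu u N : boxnorm2 nu u N = rsum (box nu N) (fun k => Cnorm2 (u k)).
Proof. unfold boxnorm2, Csum. fold (gsum (box nu N) (fun k => (Cnorm2 (u k), 0))). rewrite Re_gsum. reflexivity. Qed.

Lemma Cnorm2_nonneg z : 0 <= Cnorm2 z.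
Proof. unfold Cnorm2. nra. Qed.

Lemma boxnorm2_growing nu u : Un_growing (boxnorm2 nu u).
Proof. intro N. rewrite !boxnorm2_rsum. apply box_mono. intro; apply Cnorm2_nonneg. Qed.

Lemma l2_cv nu u : l2 nu u -> exists n, Un_cv (boxnorm2 nu u) n.
Proof.
  intros [M HM]. apply Un_cv_crit. apply boxnorm2_growing.
  exists M. intros x [i ->]. apply HM.
Qed.

Lemma boxnorm2_ge nu u p N : lattice nu p -> inbox nu N p -> Cnorm2 (u p) <= boxnorm2 nu u N.
Proof.
  intros Hp Hb. rewrite boxnorm2_rsum.
  pose proof (box_delta nu N p (fun k => (Cnorm2 (u k), 0)) Hp Hb) as E.
  apply (f_equal Re) in E. rewrite Re_gsum in E. simpl in E.
  rewrite <- E. apply rsum_le. intro k. destruct (eqpt nu k p); simpl. lra. apply Cnorm2_nonneg.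
Qed.

Lemma bound_pt : forall n (f : nat -> Z), exists M : nat, forall i, (i < n)%nat -> (Z.abs (f i) <= Z.of_nat M)%Z.
Proof.
  induction n; intros f. exists 0%nat. intros; lia.
  destruct (IHn f) as [M HM]. exists (M + Z.to_nat (Z.abs (f n)))%nat. intros i Hi.
  destruct (Nat.eq_dec i n). subst. lia. specialize (HM i ltac:(lia)). lia.
Qed.

Lemma inbox1_ev nu p : exists N0, forall N, (N0 <= N)%nat -> inbox1 nu N p.
Proof.
  destruct (bound_pt nu p) as [M HM]. exists (S M). intros N HN i Hi. specialize (HM i Hi). lia.
Qed.

Lemma cv_ev (a b : nat -> R) l N0 : (forall N, (N0 <= N)%nat -> a N = b N) -> Un_cv b l -> Un_cv a l.
Proof.
  intros H Hb eps He. destruct (Hb eps He) as [N1 HN1]. exists (max N0 N1). intros m Hm.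
  rewrite H by lia. apply HN1. lia.
Qed.

Lemma cv_const c : Un_cv (fun _ => c) c.
Proof. intros eps He. exists 0%nat. intros. unfold Rdist. rewrite Rminus_eq_0, Rabs_R0. auto. Qed.

Lemma cv_affine_Re (B : nat -> R) n K L : Un_cv B n ->
  Un_cv (fun N => Re (Cadd (Cmul K (B N, 0)) L)) (Re (Cadd (Cmul K (n, 0)) L)).
Proof.
  intro H. unfold Cadd, Cmul, Re, Im; simpl.
  replace (fst K * n - snd K * 0 + fst L) with (fst K * n + fst L) by ring.
  eapply cv_ev with (N0 := 0%nat). intros N _. instantiate (1 := fun N => fst K * B N + fst L). simpl. ring.
  apply CV_plus. apply CV_mult. apply cv_const. auto. apply cv_const.
Qed.
Lemma cv_affine_Im (B : nat -> R) n K L : Un_cv B n ->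
  Un_cv (fun N => Im (Cadd (Cmul K (B N, 0)) L)) (Im (Cadd (Cmul K (n, 0)) L)).
Proof.
  intro H. unfold Cadd, Cmul, Re, Im; simpl.
  replace (fst K * 0 + snd K * n + snd L) with (snd K * n + snd L) by ring.
  eapply cv_ev with (N0 := 0%nat). intros N _. instantiate (1 := fun N => snd K * B N + snd L). simpl. ring.
  apply CV_plus. apply CV_mult. apply cv_const. auto. apply cv_const.
Qed.

Definition NumerF nu d u lam p P Y n :=
  Cadd (Cmul (Cmul (Cmul P (Cconj P)) lam) (n, 0))
   (Cadd (Cmul (Cmul (Cmul P lam) (Cconj Y)) (u p))
   (Cadd (Cmul (Cmul Y (Cconj P)) (Cadd (Cconj (J0 nu u p)) (Cmul (d p) (Cconj (u p)))))
         (Cmul (Cmul Y (Cconj Y)) (d p)))).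
Definition DenF (u : Pt -> Cplx) p P Y n :=
  Re (Cadd (Cmul (Cmul P (Cconj P)) (n, 0))
   (Cadd (Cmul (Cmul P (Cconj Y)) (u p))
   (Cadd (Cmul (Cmul Y (Cconj P)) (Cconj (u p)))
         (Cmul Y (Cconj Y))))).

Lemma vec_num nu d u lam p P Y n :
  (forall k, lattice nu k -> Japp nu d u k = Cmul lam (u k)) ->
  lattice nu p -> Un_cv (boxnorm2 nu u) n ->
  DenF u p P Y n = 1 -> NumRange nu d (NumerF nu d u lam p P Y n).
Proof.
  intros Heig Hp Hn HD. destruct (inbox1_ev nu p) as [N0 HN0].
  exists (vec nu u p P Y).
  assert (Hcv : Un_cv (boxnorm2 nu (vec nu u p P Y)) 1).
  { rewrite <- HD. unfold DenF.
    apply cv_ev with (N0 := N0) (b := fun N => Re (Cadd (Cmul (Cmul P (Cconj P)) (boxnorm2 nu u N, 0))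
   (Cadd (Cmul (Cmul P (Cconj Y)) (u p))
   (Cadd (Cmul (Cmul Y (Cconj P)) (Cconj (u p)))
         (Cmul Y (Cconj Y)))))).
    - intros N HN. unfold boxnorm2 at 1. unfold Csum. fold (gsum (box nu N) (fun k => (Cnorm2 (vec nu u p P Y k), 0))).
      rewrite norm_expand; auto. rewrite Bc_pair. reflexivity.
    - apply cv_affine_Re. auto. }
  split; [|split].
  - exists 1. intro N. apply growing_ineq; auto. apply boxnorm2_growing.
  - exact Hcv.
  - unfold NumerF. split.
    + apply cv_ev with (N0 := N0) (b := fun N => Re (Cadd (Cmul (Cmul (Cmul P (Cconj P)) lam) (boxnorm2 nu u N, 0))
   (Cadd (Cmul (Cmul (Cmul P lam) (Cconj Y)) (u p))
   (Cadd (Cmul (Cmul Y (Cconj P)) (Cadd (Cconj (J0 nu u p)) (Cmul (d p) (Cconj (u p)))))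
         (Cmul (Cmul Y (Cconj Y)) (d p)))))).
      * intros N HN. unfold Csum. fold (gsum (box nu N) (fun k => Cmul (Japp nu d (vec nu u p P Y) k) (Cconj (vec nu u p P Y k)))).
        rewrite (inner_expand nu d u lam); auto. rewrite Bc_pair. reflexivity.
      * apply cv_affine_Re. auto.
    + apply cv_ev with (N0 := N0) (b := fun N => Im (Cadd (Cmul (Cmul (Cmul P (Cconj P)) lam) (boxnorm2 nu u N, 0))
   (Cadd (Cmul (Cmul (Cmul P lam) (Cconj Y)) (u p))
   (Cadd (Cmul (Cmul Y (Cconj P)) (Cadd (Cconj (J0 nu u p)) (Cmul (d p) (Cconj (u p)))))
         (Cmul (Cmul Y (Cconj Y)) (d p)))))).
      * intros N HN. unfold Csum. fold (gsum (box nu N) (fun k => Cmul (Japp nu d (vec nu u p P Y) k) (Cconj (vec nu u p P Y k)))).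
        rewrite (inner_expand nu d u lam); auto. rewrite Bc_pair. reflexivity.
      * apply cv_affine_Im. auto.
Qed.

Ltac sq x := let H := fresh in pose proof (Rle_0_sqr x) as H; unfold Rsqr in H.

Lemma key_ineq (X q s1 c : R) : 0 <= X -> 0 <= q -> c * c <= X * q ->
  X + 2 * c * s1 + q * s1 * s1 <= 2 * X + 2 * q * s1 * s1.
Proof.
  intros HX Hq Hc. destruct (Req_dec X 0) as [E|E].
  - subst. assert (c = 0) by nra. subst. nra.
  - assert (X * (X + q * s1 * s1 - 2 * c * s1) >= 0).
    { assert (X * (X + q * s1 * s1 - 2 * c * s1) = (X - c * s1) * (X - c * s1) + (X * q - c * c) * (s1 * s1)) by ring.
      assert (0 <= (X * q - c * c) * (s1 * s1)) by (apply Rmult_le_pos; [lra| pose proof (Rle_0_sqr s1); unfold Rsqr in *; lra]).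
      assert (0 <= (X - c * s1) * (X - c * s1)) by (pose proof (Rle_0_sqr (X - c * s1)); unfold Rsqr in *; lra). lra. }
    assert (X + q * s1 * s1 - 2 * c * s1 >= 0). { destruct (Rle_dec 0 (X + q * s1 * s1 - 2 * c * s1)). lra.
      assert (0 < X) by lra. assert (X * (X + q * s1 * s1 - 2 * c * s1) < 0). apply Rmult_pos_neg; lra. lra. }
    lra.
Qed.

Lemma solve (n w : R) (A G lam : Cplx) : 0 < n -> 0 <= w <= 1 -> 0 < Cnorm2 A ->
  exists eps, 0 < eps /\ forall z, Cmod (Csub z lam) < eps -> exists Y,
   Cadd (Cmul lam (n, 0)) (Cadd (Cmul A Y) (Cmul G (Cnorm2 Y, 0))) = Cmul z (n + w * Cnorm2 Y, 0).
Proof.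
  intros Hn Hw HA.
  destruct lam as [l1 l2], A as [A1 A2], G as [G1 G2].
  unfold Cnorm2, Re, Im in HA; simpl in HA. set (a2 := A1*A1 + A2*A2) in *.
  set (K := 4 * (l1*l1+l2*l2) + 4 + 2 * (G1*G1+G2*G2)).
  assert (HK : 0 < K) by (unfold K; sq l1; sq l2; sq G1; sq G2; lra).
  set (T := Rmin 1 (a2 * a2 / (16 * K * (n * n)))).
  assert (HT : 0 < T). { unfold T. apply Rmin_glb_lt. lra. apply Rdiv_lt_0_compat; [apply Rmult_lt_0_compat; lra | apply Rmult_lt_0_compat; [lra| apply Rmult_lt_0_compat; lra]]. }
  exists (sqrt T). split. apply sqrt_lt_R0; auto.
  intros [z1 z2] Hz.
  unfold Cmod, Csub, Cnorm2, Re, Im in Hz; simpl in Hz.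
  apply sqrt_lt_0_alt in Hz.
  set (t1 := z1 - l1) in *. set (t2 := z2 - l2) in *.
  set (Q1 := z1 * w - G1). set (Q2 := z2 * w - G2).
  set (f := fun s => (t1 * n + Q1 * s) * (t1 * n + Q1 * s) + (t2 * n + Q2 * s) * (t2 * n + Q2 * s) - a2 * s).
  set (X := (t1 * t1 + t2 * t2) * (n * n)).
  set (s1 := 4 * X / a2).
  assert (HX : 0 <= X) by (unfold X; sq t1; sq t2; sq n; apply Rmult_le_pos; lra).
  assert (HT1 : t1*t1+t2*t2 <= 1). { assert (T <= 1) by apply Rmin_l. lra. }
  assert (HT2 : t1*t1+t2*t2 <= a2 * a2 / (16 * K * (n * n))). { assert (T <= a2 * a2 / (16 * K * (n * n))) by apply Rmin_r. lra. }
  assert (Hq : Q1*Q1 + Q2*Q2 <= K).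
  { unfold Q1, Q2, K. assert (Ez1 : z1 = t1 + l1) by (unfold t1; ring). assert (Ez2 : z2 = t2 + l2) by (unfold t2; ring).
    assert (z1*z1+z2*z2 <= 2*(l1*l1+l2*l2) + 2).
    { rewrite Ez1, Ez2. sq (t1 - l1); sq (t2 - l2). nra. }
    assert ((z1*w)*(z1*w) + (z2*w)*(z2*w) <= z1*z1+z2*z2).
    { sq z1; sq z2. assert (0 <= 1 - w*w) by nra.
      assert (0 <= z1*z1*(1-w*w)) by (apply Rmult_le_pos; lra).
      assert (0 <= z2*z2*(1-w*w)) by (apply Rmult_le_pos; lra). nra. }
    sq (z1*w+G1); sq (z2*w+G2). nra. }
  assert (HXK : 16 * K * X <= a2 * a2).
  { unfold X. apply Rmult_le_compat_l with (r := 16 * K * (n*n)) in HT2; [|nra].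
    replace (16 * K * (n * n) * (a2 * a2 / (16 * K * (n * n)))) with (a2 * a2) in HT2 by (field; nra). nra. }
  assert (Hs1 : 0 <= s1) by (unfold s1; apply Rmult_le_pos; [lra| left; apply Rinv_0_lt_compat; lra]).
  assert (Hf0 : 0 <= f 0) by (unfold f; nra).
  assert (Hf1 : f s1 <= 0).
  { unfold f. set (c := t1 * n * Q1 + t2 * n * Q2). set (q := Q1 * Q1 + Q2 * Q2).
    assert (E : f s1 = X + 2 * c * s1 + q * s1 * s1 - 4 * X).
    { unfold f, s1, c, q, X. field. lra. }
    unfold f in E. rewrite E.
    assert (c * c <= X * q).
    { assert (X * q - c * c = (n * (t1 * Q2 - t2 * Q1)) * (n * (t1 * Q2 - t2 * Q1))) by (unfold c, X, q; ring).
      sq (n * (t1 * Q2 - t2 * Q1)). lra. }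
    assert (X + 2 * c * s1 + q * s1 * s1 <= 2 * X + 2 * q * s1 * s1) by (apply key_ineq; [lra | unfold q; sq Q1; sq Q2; lra | lra]).
    assert (q * s1 * s1 <= X).
    { unfold s1. replace (q * (4 * X / a2) * (4 * X / a2)) with (X * (16 * q * X) / (a2 * a2)) by (field; lra).
      apply Rmult_le_reg_r with (a2 * a2). nra. unfold Rdiv. rewrite Rmult_assoc, Rinv_l by nra.
      assert (16 * q * X <= a2 * a2) by (unfold q in *; nra). nra. }
    lra. }
  destruct (IVT_cor f 0 s1) as [s [Hs Hfs]].
  - unfold f. reg.
  - auto.
  - nra.
  - set (W1 := t1 * n + Q1 * s). set (W2 := t2 * n + Q2 * s).
    assert (HW : W1 * W1 + W2 * W2 = a2 * s) by (unfold f in Hfs; unfold W1, W2; lra).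
    exists ((W1 * A1 + W2 * A2) / a2, (W2 * A1 - W1 * A2) / a2).
    assert (HY : Cnorm2 ((W1 * A1 + W2 * A2) / a2, (W2 * A1 - W1 * A2) / a2) = s).
    { unfold Cnorm2, Re, Im; simpl. apply Rmult_eq_reg_r with a2; [|lra].
      replace (((W1 * A1 + W2 * A2) / a2 * ((W1 * A1 + W2 * A2) / a2) +
               (W2 * A1 - W1 * A2) / a2 * ((W2 * A1 - W1 * A2) / a2)) * a2)
        with ((W1*W1+W2*W2) * (A1*A1+A2*A2) / a2) by (field; lra).
      rewrite HW. unfold a2. field. fold a2. lra. }
    rewrite HY. unfold Cadd, Cmul, Re, Im; simpl. unfold W1, W2, Q1, Q2, t1, t2.
    apply injective_projections; simpl; unfold a2 in *; field; lra.
Qed.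

Definition NumerC lam up dp P Y n :=
  Cadd (Cmul (Cmul (Cmul P (Cconj P)) lam) (n, 0))
   (Cadd (Cmul (Cmul (Cmul P lam) (Cconj Y)) up)
   (Cadd (Cmul (Cmul Y (Cconj P)) (Cadd (Cconj (Csub (Cmul lam up) (Cmul dp up))) (Cmul dp (Cconj up))))
         (Cmul (Cmul Y (Cconj Y)) dp))).
Definition DenC (up : Cplx) P Y n :=
  Re (Cadd (Cmul (Cmul P (Cconj P)) (n, 0))
   (Cadd (Cmul (Cmul P (Cconj Y)) up)
   (Cadd (Cmul (Cmul Y (Cconj P)) (Cconj up))
         (Cmul Y (Cconj Y))))).

Definition P0 (up Y : Cplx) n := Csub (1, 0) (Cmul Y (Re up / n, - Im up / n)).
Definition Acoef (lam up dp : Cplx) := (2 * (Im dp - Im lam) * Im up, 2 * (Im dp - Im lam) * Re up).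
Definition Gcoef (lam up dp : Cplx) n :=
  Csub dp (Cmul (Re lam, 2 * Im dp - Im lam) (Cnorm2 up / n, 0)).

Lemma alg_num lam up dp Y n r : n <> 0 ->
  NumerC lam up dp (Cmul (P0 up Y n) (r, 0)) (Cmul Y (r, 0)) n =
  Cmul (r * r, 0) (Cadd (Cmul lam (n, 0)) (Cadd (Cmul (Acoef lam up dp) Y) (Cmul (Gcoef lam up dp n) (Cnorm2 Y, 0)))).
Proof.
  intro Hn. destruct lam as [l1 l2], up as [a1 a2], dp as [e1 e2], Y as [y1 y2].
  unfold NumerC, P0, Acoef, Gcoef, Cadd, Csub, Cmul, Cconj, Cnorm2, Re, Im; simpl.
  apply injective_projections; simpl; field; auto.
Qed.

Lemma alg_den up Y n r : n <> 0 ->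
  DenC up (Cmul (P0 up Y n) (r, 0)) (Cmul Y (r, 0)) n = r * r * (n + (1 - Cnorm2 up / n) * Cnorm2 Y).
Proof.
  intro Hn. destruct up as [a1 a2], Y as [y1 y2].
  unfold DenC, P0, Cadd, Csub, Cmul, Cconj, Cnorm2, Re, Im; simpl. field; auto.
Qed.

Lemma support nu d u lam p :
  l2 nu u -> (forall k, lattice nu k -> Japp nu d u k = Cmul lam (u k)) ->
  boundary (NumRange nu d) lam -> lattice nu p -> u p <> C0 -> Im (d p) = Im lam.
Proof.
  intros Hl2 Heig Hbd Hp Hu.
  destruct (Req_dec (Im (d p)) (Im lam)) as [E|Hne]; auto. exfalso.
  destruct (l2_cv nu u Hl2) as [n Hn].
  destruct (inbox1_ev nu p) as [N0 HN0].
  assert (Hmu : Cnorm2 (u p) <= n).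
  { apply Rle_trans with (boxnorm2 nu u N0). apply boxnorm2_ge; auto. apply inbox1_inbox. apply HN0; lia.
    apply growing_ineq; auto. apply boxnorm2_growing. }
  assert (Hmu0 : 0 < Cnorm2 (u p)).
  { destruct (u p) as [a1 a2] eqn:Eu. unfold Cnorm2, Re, Im; simpl.
    destruct (Req_dec a1 0); destruct (Req_dec a2 0). subst. exfalso; apply Hu; reflexivity.
    all: sq a1; sq a2; nra. }
  assert (Hn0 : 0 < n) by lra.
  set (w := 1 - Cnorm2 (u p) / n).
  assert (Hw : 0 <= w <= 1).
  { unfold w. split. assert (Cnorm2 (u p) / n <= 1). apply Rmult_le_reg_r with n; auto.
    unfold Rdiv. rewrite Rmult_assoc, Rinv_l by lra. lra. lra.
    assert (0 <= Cnorm2 (u p) / n) by (unfold Rdiv; apply Rmult_le_pos; [lra | left; apply Rinv_0_lt_compat; lra]). lra. }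
  assert (HA : 0 < Cnorm2 (Acoef lam (u p) (d p))).
  { unfold Acoef, Cnorm2 in *. simpl.
    set (be := Im (d p) - Im lam). assert (be <> 0) by (unfold be; lra).
    replace (2 * be * Im (u p) * (2 * be * Im (u p)) + 2 * be * Re (u p) * (2 * be * Re (u p)))
      with (4 * (be * be) * (Re (u p) * Re (u p) + Im (u p) * Im (u p))) by ring.
    apply Rmult_lt_0_compat; auto. assert (0 < be * be). destruct (Rlt_dec be 0); nra. lra. }
  destruct (solve n w (Acoef lam (u p) (d p)) (Gcoef lam (u p) (d p) n) lam Hn0 Hw HA) as [eps [Heps Hsol]].
  destruct (Hbd eps Heps) as [_ [z [Hz Hzd]]].
  destruct (Hsol z Hzd) as [Y HY].
  apply Hz.
  set (D := n + w * Cnorm2 Y).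
  assert (HD : 0 < D) by (unfold D; assert (0 <= w * Cnorm2 Y) by (apply Rmult_le_pos; [lra|apply Cnorm2_nonneg]); lra).
  set (r := / sqrt D).
  assert (Hr : r * r * D = 1).
  { unfold r. rewrite <- Rinv_mult, sqrt_sqrt by lra. field. lra. }
  assert (EN : NumerF nu d u lam p (Cmul (P0 (u p) Y n) (r, 0)) (Cmul Y (r, 0)) n = z).
  { assert (J0e : J0 nu u p = Csub (Cmul lam (u p)) (Cmul (d p) (u p))).
    { pose proof (Heig p Hp) as Ep. unfold Japp in Ep. rewrite <- Ep. ceq. }
    unfold NumerF. rewrite J0e. fold (NumerC lam (u p) (d p) (Cmul (P0 (u p) Y n) (r, 0)) (Cmul Y (r, 0)) n).
    rewrite alg_num by lra. rewrite HY. fold D. destruct z as [z1 z2].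
    unfold Cmul, Re, Im; simpl. apply injective_projections; simpl.
    replace (r * r * (z1 * D - z2 * 0) - 0 * (z1 * 0 + z2 * D)) with (z1 * (r * r * D)) by ring. rewrite Hr; ring.
    replace (r * r * (z1 * 0 + z2 * D) + 0 * (z1 * D - z2 * 0)) with (z2 * (r * r * D)) by ring. rewrite Hr; ring. }
  rewrite <- EN. apply vec_num; auto.
  change (DenC (u p) (Cmul (P0 (u p) Y n) (r, 0)) (Cmul Y (r, 0)) n = 1).
  rewrite alg_den by lra. fold w. fold D. exact Hr.
Qed.

Lemma max_exists (Q : Z -> Prop) M : forall t m0, (Z.to_nat (M - m0) <= t)%nat -> Q m0 ->
  (forall m, Q m -> (m <= M)%Z) -> exists m, Q m /\ forall m', Q m' -> (m' <= m)%Z.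
Proof.
  induction t; intros m0 Ht Hq HM.
  - exists m0. split; auto. intros m' Hm'. pose proof (HM m' Hm'). pose proof (HM m0 Hq). lia.
  - destruct (classic (exists m', Q m' /\ (m0 < m')%Z)) as [[m' [Hq' Hlt]]|Hn].
    + apply (IHt m'); auto. specialize (HM m' Hq'). lia.
    + exists m0. split; auto. intros m' Hm'. destruct (Z_le_gt_dec m' m0); auto. exfalso. apply Hn. exists m'. split; auto; lia.
Qed.

Lemma J0_single nu u k jj v : (jj < nu)%nat ->
  (forall i, (i < nu)%nat -> i <> jj -> u (shiftp k i) = C0 /\ u (shiftm k i) = C0) ->
  Cadd (u (shiftp k jj)) (u (shiftm k jj)) = v -> J0 nu u k = v.
Proof.
  intros Hj H Hv. rewrite J0_gsum.
  transitivity (gsum (seq 0 nu) (fun i => if Nat.eqb i jj then v else C0)).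
  - apply gsum_ext_in. intros i Hi. apply in_seq in Hi. destruct (Nat.eqb_spec i jj). subst; auto.
    destruct (H i ltac:(lia) n) as [-> ->]. ceq.
  - apply (gsum_seq_delta (fun _ => v)). lia.
Qed.

Lemma shiftm_shiftp k i : shiftm (shiftp k i) i = k.
Proof. extensionality x. unfold shiftm, shiftp, upd. destruct (Nat.eqb_spec x i); subst; rewrite ?Nat.eqb_refl; lia. Qed.
Lemma shiftp_shiftm k i : shiftp (shiftm k i) i = k.
Proof. extensionality x. unfold shiftm, shiftp, upd. destruct (Nat.eqb_spec x i); subst; rewrite ?Nat.eqb_refl; lia. Qed.
Lemma shift_coord_p k i x : shiftp k i x = if Nat.eqb x i then (k i + 1)%Z else k x.
Proof. reflexivity. Qed.
Lemma shift_coord_m k i x : shiftm k i x = if Nat.eqb x i then (k i - 1)%Z else k x.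
Proof. reflexivity. Qed.

Lemma Cadd_C0 : Cadd C0 C0 = C0. Proof. ceq. Qed.

Theorem mainTheorem5 (nu : nat) (d : Pt -> Cplx) (b : R) :
  (1 <= nu)%nat ->
  (exists B : R, forall k, lattice nu k -> Cmod (d k) <= B) ->
  (exists j : nat, (1 <= j <= nu)%nat /\
     ((exists M : Z, forall k, lattice nu k -> Im (d k) = b -> (k (j - 1)%nat <= M)%Z) \/
      (exists m : Z, forall k, lattice nu k -> Im (d k) = b -> (m <= k (j - 1)%nat)%Z))) ->
  ~ (exists lam : Cplx, boundary_eigenvalue nu d lam /\ Im lam = b).
Proof.
  intros Hnu _ [j [Hj Hcase]] [lam [[[u [Hl2 [[k0 [Hk0 Hu0]] Heig]]] Hbd] Hb]].
  set (jj := (j - 1)%nat). assert (Hjj : (jj < nu)%nat) by (unfold jj; lia).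
  assert (Hsupp : forall k, lattice nu k -> u k <> C0 -> Im (d k) = b).
  { intros k Hk Huk. rewrite <- Hb. eapply support; eauto. }
  destruct Hcase as [[M HM]|[m HM]].
  - set (Q := fun x => exists k, lattice nu k /\ u k <> C0 /\ k jj = x).
    destruct (max_exists Q M (Z.to_nat (M - k0 jj)) (k0 jj)) as [mx [[k [Hk [Huk Hkx]]] Hmax]].
    + lia.
    + exists k0; auto.
    + intros x [k [Hk [Huk <-]]]. apply HM; auto.
    + assert (Hout : forall q, lattice nu q -> (q jj > mx)%Z -> u q = C0).
      { intros q Hq Hgt. destruct (classic (u q = C0)); auto. exfalso.
        assert (Q (q jj)) by (exists q; auto). specialize (Hmax _ H0). lia. }
      set (k' := shiftp k jj).
      assert (Hk' : lattice nu k') by (apply shiftp_lattice; auto).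
      assert (Hu' : u k' = C0). { apply Hout; auto. unfold k'. rewrite shift_coord_p, Nat.eqb_refl. lia. }
      assert (HJ : J0 nu u k' = u k).
      { apply J0_single with jj; auto.
        - intros i Hi Hne. split; apply Hout.
          + apply shiftp_lattice; auto.
          + rewrite shift_coord_p. apply Nat.eqb_neq in Hne. rewrite (Nat.eqb_sym jj i), Hne.
            unfold k'. rewrite shift_coord_p, Nat.eqb_refl. lia.
          + apply shiftm_lattice; auto.
          + rewrite shift_coord_m. apply Nat.eqb_neq in Hne. rewrite (Nat.eqb_sym jj i), Hne.
            unfold k'. rewrite shift_coord_p, Nat.eqb_refl. lia.
        - unfold k' at 2. rewrite shiftm_shiftp. rewrite (Hout (shiftp k' jj)). ceq.
          apply shiftp_lattice; auto. rewrite shift_coord_p, Nat.eqb_refl. unfold k'. rewrite shift_coord_p, Nat.eqb_refl. lia. }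
      pose proof (Heig k' Hk') as E. unfold Japp in E. rewrite HJ, Hu' in E.
      apply Huk. replace (u k) with (Cadd (u k) (Cmul (d k') C0)) by ceq. rewrite E. ceq.
  - set (Q := fun x => exists k, lattice nu k /\ u k <> C0 /\ k jj = (- x)%Z).
    destruct (max_exists Q (- m)%Z (Z.to_nat (- m - - k0 jj)) (- k0 jj)%Z) as [mx [[k [Hk [Huk Hkx]]] Hmax]].
    + lia.
    + exists k0; split; auto; split; auto; lia.
    + intros x [k [Hk [Huk Hx]]]. specialize (HM k Hk (Hsupp k Hk Huk)). fold jj in HM. lia.
    + assert (Hout : forall q, lattice nu q -> (q jj < - mx)%Z -> u q = C0).
      { intros q Hq Hgt. destruct (classic (u q = C0)); auto. exfalso.
        assert (Q (- q jj)%Z) by (exists q; split; auto; split; auto; lia). specialize (Hmax _ H0). lia. }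
      set (k' := shiftm k jj).
      assert (Hk' : lattice nu k') by (apply shiftm_lattice; auto).
      assert (Hu' : u k' = C0). { apply Hout; auto. unfold k'. rewrite shift_coord_m, Nat.eqb_refl. lia. }
      assert (HJ : J0 nu u k' = u k).
      { apply J0_single with jj; auto.
        - intros i Hi Hne. split; apply Hout.
          + apply shiftp_lattice; auto.
          + rewrite shift_coord_p. apply Nat.eqb_neq in Hne. rewrite (Nat.eqb_sym jj i), Hne.
            unfold k'. rewrite shift_coord_m, Nat.eqb_refl. lia.
          + apply shiftm_lattice; auto.
          + rewrite shift_coord_m. apply Nat.eqb_neq in Hne. rewrite (Nat.eqb_sym jj i), Hne.
            unfold k'. rewrite shift_coord_m, Nat.eqb_refl. lia.
        - unfold k' at 1. rewrite shiftp_shiftm. rewrite (Hout (shiftm k' jj)). ceq.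
          apply shiftm_lattice; auto. rewrite shift_coord_m, Nat.eqb_refl. unfold k'. rewrite shift_coord_m, Nat.eqb_refl. lia. }
      pose proof (Heig k' Hk') as E. unfold Japp in E. rewrite HJ, Hu' in E.
      apply Huk. replace (u k) with (Cadd (u k) (Cmul (d k') C0)) by ceq. rewrite E. ceq.
Qed.
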